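(* Let $\mathcal{T}$ be a conforming triangulation of a polygonal domain $\Omega\subset\mathbb{R}^2$ satisfying the mesh regularity condition of the context, with $P_1$ space $\mathcal V$, and let $A$ satisfy the standing assumptions (S). Let $w,u\in\mathcal V$ and $z(t)\in\mathcal V$ for $0\le t\le1$, let $v$ be the test function associated with $w$, and let $T\in\mathcal T_c$ have vertices $a_i,a_j,a_k$ ordered so that $w(a_i)\ge w(a_j)\ge w(a_k)$, with $w(a_i)>0$ and $w(a_k)\le0$; let $\theta_j$ be the interior angle of $T$ at $a_j$. Then $$\int_T\int_0^1\frac{\partial A}{\partial\eta}(x,z(t),\nabla u)\,w\,\nabla u^T\nabla v\,dt\,dx\ge-\frac{\delta_T(w)\,\delta_T(u)}{2\sin\theta_j}\,\frac{7K_\eta}{6}\,(1+r_T^{-1}).$$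
   Context: Setting: $\Omega\subset\mathbb{R}^2$ polygonal, $\partial\Omega=\Gamma_D\cup\Gamma_N$ with $\Gamma_D$ of positive measure; $\mathcal{T}$ a conforming triangulation resolving $\Gamma_D,\Gamma_N$; $\mathcal{D}$ the set of vertices of $\mathcal T$ not on $\Gamma_D$; $\mathcal{V}$ the continuous piecewise linear functions on $\mathcal T$ vanishing on $\Gamma_D$. Mesh regularity: there are $0<t_{min}\le t_{max}<\pi/2$ with every interior angle of every $T\in\mathcal T$ in $[t_{min},t_{max}]$. For $T$ with angles $\theta_1,\theta_2,\theta_3$, $r_T:=\min_{i,j}\sin\theta_i/\sin\theta_j$. For $\phi\in\mathcal V$, $\delta_T(\phi):=\max_{i,j\in\{1,2,3\}}|\phi(a_i)-\phi(a_j)|$ over the vertices $a_1,a_2,a_3$ of $T$. Test function: for $w\in\mathcal V$, $v\in\mathcal V$ is defined by $v(a)=1$ if $w(a)>0$ and $v(a)=0$ if $w(a)\le0$, for $a\in\mathcal D$. $\mathcal{T}_c$ is the set of $T\in\mathcal T$ on which $v$ is neither identically $1$ nor identically $0$. (S) $a(x,\eta,\xi)=A(x,\eta,\xi)\xi$ with $A:\Omega\times\mathbb R\times\mathbb R^2\to\mathbb R$; $a$ and $b(x,\eta)$ Carathéodory, $C^1$ in $(\eta,\xi)$ (resp. $\eta$) for a.e. $x$, measurable in $x$; there are $\gamma_a>0,K_\eta>0,B_\eta\ge0$ with, for a.e. $x$ and all $\eta,\xi,\zeta$: $\sum_{i,j}\frac{\partial a_i}{\partial\xi_j}(x,\eta,\xi)\zeta_i\zeta_j\ge\gamma_a|\zeta|^2$,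 $|\partial A/\partial\eta|\le K_\eta$, $0\le\partial b/\partial\eta\le B_\eta$. *)

(* Defs.v *)
From HB Require Import structures.
From mathcomp Require Import all_boot all_order all_algebra.
From mathcomp Require Import all_classical all_reals all_analysis.
Set Implicit Arguments. Unset Strict Implicit. Unset Printing Implicit Defensive.
Import Order.TTheory GRing.Theory Num.Theory.
Import numFieldNormedType.Exports.
Local Open Scope classical_set_scope.
Local Open Scope ring_scope.

Section Defs.
Variable R : realType.
Implicit Types (p q x ai aj ak : R * R).

Definition dot2 p q : R := p.1 * q.1 + p.2 * q.2.
Definition norm2 p : R := Num.sqrt (dot2 p p).
Definition det2 p q : R := p.1 * q.2 - p.2 * q.1.

Definition leb2 := ((@lebesgue_measure R) \x (@lebesgue_measure R))%E.

Definition triangle ai aj ak : set (R * R) :=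
  [set x | exists l1 l2 l3 : R, [/\ 0 <= l1, 0 <= l2, 0 <= l3,
     l1 + l2 + l3 = 1 & x = l1 *: ai + l2 *: aj + l3 *: ak]].

Definition angle_at (a b c : R * R) : R :=
  acos (dot2 (b - a) (c - a) / (norm2 (b - a) * norm2 (c - a))).

Definition bary ai aj ak x : R :=
  det2 (aj - x) (ak - x) / det2 (aj - ai) (ak - ai).

(** The P1 (affine) function on the triangle with vertex values fi fj fk
    (restriction to T of an element of V, extended affinely to R^2) *)
Definition p1 ai aj ak (fi fj fk : R) : R * R -> R :=
  fun x => fi * bary ai aj ak x + fj * bary aj ak ai x + fk * bary ak ai aj x.

Definition grad2 (f : R * R -> R) (x : R * R) : R * R :=
  ('D_((1, 0) : R * R) f x, 'D_((0, 1) : R * R) f x).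

Definition deltaT (fi fj fk : R) : R :=
  \big[Num.max/0]_(p <- [:: fi; fj; fk]) \big[Num.max/0]_(q <- [:: fi; fj; fk])
     `|p - q|.

Definition rT ai aj ak : R :=
  let s := [:: sin (angle_at ai aj ak); sin (angle_at aj ak ai);
               sin (angle_at ak ai aj)] in
  \big[Num.min/1]_(p <- s) \big[Num.min/1]_(q <- s) (p / q).

Definition hypS (Omega : set (R * R)) (A : R * R -> R -> R * R -> R)
  (b : R * R -> R -> R) (gam_a K_eta B_eta : R) : Prop :=
  [/\ [/\ 0 < gam_a, 0 < K_eta & 0 <= B_eta],
   ((forall eta xi, measurable_fun Omega (fun x => A x eta xi)) /\
    (forall eta, measurable_fun Omega (fun x => b x eta))),
   {ae leb2, forall x, Omega x ->
      (forall (P H : R * (R * R)),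
         derivable (fun Q : R * (R * R) => A x Q.1 Q.2 *: Q.2) P H) /\
      (forall H : R * (R * R),
         continuous (fun Q : R * (R * R) =>
           'D_H (fun Q : R * (R * R) => A x Q.1 Q.2 *: Q.2) Q)) /\
      (forall eta xi, derivable (fun e => A x e xi) eta 1) /\
      (forall eta, derivable (b x) eta 1) /\
      continuous (fun eta => derive1 (b x) eta)} &
   {ae leb2, forall x, Omega x ->
      (forall eta xi zeta,
         gam_a * dot2 zeta zeta <=
         dot2 ('D_zeta (fun xi' => A x eta xi' *: xi') xi) zeta) /\
      (forall eta xi, `|derive1 (fun e => A x e xi) eta| <= K_eta) /\
      (forall eta, 0 <= derive1 (b x) eta <= B_eta)}].

End Defs.

(* Main.v *)
Require Import Defs.
From HB Require Import structures.
From mathcomp Require Import all_boot all_order all_algebra.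
From mathcomp Require Import all_classical all_reals all_analysis.
From mathcomp Require Import ring lra.
Import Order.TTheory GRing.Theory Num.Theory.
Import numFieldNormedType.Exports.
Local Open Scope classical_set_scope.
Local Open Scope ring_scope.
Import measurable_realfun.
Import HBNNSimple.
Lemma lowerL {d} {T : measurableType d} {R : realType}
  (mu : {measure set T -> \bar R}) (D N : set T) (F : T -> \bar R) (M a : R) :
  0 <= M -> measurable N -> mu N = 0%E ->
  (forall x, D x -> ~ N x -> ((- M)%:E <= F x)%E) ->
  (forall B, measurable B -> B `<=` D -> (mu B <= a%:E)%E) ->
  ((- (M * a))%:E <= \int[mu]_(x in D) F x)%E.
Proof.
move=> M0 mN muN FM areaB.
rewrite integralE.
have h1 : (0 <= \int[mu]_(x in D) F^\+ x)%E.
  by apply: integral_ge0 => x _; exact: funepos_ge0.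
have h2 : (\int[mu]_(x in D) F^\- x <= (M * a)%:E)%E.
  rewrite ge0_integralE; last by move=> x _; exact: funeneg_ge0.
  apply: ge_ereal_sup => _ [h /= hle <-].
  pose S := h @^-1` `]0%R, +oo[.
  have mS : measurable S by apply: measurable_sfunP.
  have SD : S `<=` D.
    move=> x; rewrite /S /= in_itv /= andbT => hx.
    have := hle x; rewrite /patch; case: ifPn => [/set_mem //|_].
    by rewrite /= lee_fin leNgt hx.
  have -> : sintegral mu h = (\int[mu]_x (h x)%:E)%E.
    by rewrite integral_nnsfun // patch_setT.
  apply: (@le_trans _ _ (\int[mu]_x ((M * \1_S x)%:E))%E).
    apply: ae_ge0_le_integral => //.
    - by move=> x _; rewrite lee_fin.
    - by apply/measurable_EFinP; exact: measurable_funPT.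
    - by move=> x _; rewrite lee_fin mulr_ge0 // indic_ge0.
    - apply/measurable_EFinP; apply: measurable_funM => //.
    exists N; split => //= x; apply: contra_notP => Nx _.
    have [Sx|Sx] := boolP (x \in S).
      have xS : S x by exact: set_mem.
      rewrite indicE Sx mulr1.
      have := hle x; rewrite /patch; case: ifPn => [_|/negP]; last first.
        by move=> H; exfalso; apply: H; apply/mem_set; exact: SD.
      move=> /le_trans; apply; rewrite funenegE ge_max; apply/andP; split => //.
      by rewrite leeNl -EFinN; apply: FM => //; exact: SD.
    rewrite indicE (negbTE Sx) mulr0 lee_fin.
    rewrite leNgt; apply/negP => hx; move/negP: Sx; apply; apply/mem_set.
    by rewrite /S /= in_itv /= andbT.
  under eq_integral do rewrite EFinM.
  rewrite ge0_integralZl_EFin //.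
  rewrite integral_indic // setIT EFinM.
  by apply: lee_wpmul2l; [rewrite lee_fin | exact: areaB].
  by apply/measurable_EFinP; exact: measurable_indic.
apply: le_trans (leeB h1 h2).
by rewrite sub0e; exact: lexx.
Qed.
Lemma sec_bound (R : realType) (E : set R) (h : R) : measurable E -> 0 <= h ->
  (forall y y', E y -> E y' -> y - y' <= h) ->
  (lebesgue_measure E <= h%:E)%E.
Proof.
move=> mE h0 hE.
have [->|/set0P [y0 Ey0]] := eqVneq E set0; first by rewrite measure0 lee_fin.
have lbE : has_lbound E.
  by exists (y0 - h) => y Ey; have := hE y0 y Ey0 Ey; lra.
have neE : E !=set0 by exists y0.
set m := inf E.
have sub : E `<=` [set` `[m, m + h]].
  move=> y Ey; rewrite /= in_itv /=; apply/andP; split.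
    exact: inf_lbound.
  have : y - h <= m.
    apply: lb_le_inf => // y' Ey'; have := hE y y' Ey Ey'; lra.
  lra.
apply: (@le_trans _ _ (lebesgue_measure [set` `[m, m + h]%R])).
  by apply: le_measure => //; rewrite inE.
rewrite lebesgue_measure_itv; case: ifPn => _; last by rewrite lee_fin.
by rewrite /= -EFinD lee_fin addrAC subrr add0r.
Qed.
Lemma chord_core (R : realType) (ai aj ak : R * R) (l1 l2 l3 m1 m2 m3 psi : R) :
  l1 + l2 + l3 = 1 -> m1 + m2 + m3 = 1 -> 0 <= l2 -> 0 <= m2 ->
  l2 <= psi -> m2 <= psi -> ai.1 <= ak.1 ->
  let p := l1 *: ai + l2 *: aj + l3 *: ak in
  let q := m1 *: ai + m2 *: aj + m3 *: ak in
  p.1 = q.1 ->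
  (p.2 - q.2) * (ak.1 - ai.1) <= `|det2 (aj - ai) (ak - ai)| * psi.
Proof.
move=> hl hm l20 m20 lp mp xik p q e1.
have {}e1 : l1 * ai.1 + l2 * aj.1 + l3 * ak.1 = m1 * ai.1 + m2 * aj.1 + m3 * ak.1 := e1.
rewrite /p /q /=.
change ((l1 * ai.2 + l2 * aj.2 + l3 * ak.2 - (m1 * ai.2 + m2 * aj.2 + m3 * ak.2)) * (ak.1 - ai.1) <= `|det2 (aj - ai) (ak - ai)| * psi).
have el1 : l1 = 1 - l2 - l3 by lra.
have em1 : m1 = 1 - m2 - m3 by lra.
subst l1 m1.
set al := l2 - m2.
have key : al * det2 (aj - ai) (ak - ai) =
   - ((ak.1 - ai.1) * (((1 - l2 - l3) * ai.2 + l2 * aj.2 + l3 * ak.2) -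
                       ((1 - m2 - m3) * ai.2 + m2 * aj.2 + m3 * ak.2))).
  rewrite /det2 /= /al.
  have e1' : (l2 - m2) * (aj.1 - ai.1) + (l3 - m3) * (ak.1 - ai.1) = 0.
    transitivity (((1 - l2 - l3) * ai.1 + l2 * aj.1 + l3 * ak.1) - ((1 - m2 - m3) * ai.1 + m2 * aj.1 + m3 * ak.1)).
      ring.
    by rewrite e1 subrr.
  transitivity ((ak.2 - ai.2) * ((l2 - m2) * (aj.1 - ai.1) + (l3 - m3) * (ak.1 - ai.1))
    - ((ak.1 - ai.1) * (((1 - l2 - l3) * ai.2 + l2 * aj.2 + l3 * ak.2) -
                       ((1 - m2 - m3) * ai.2 + m2 * aj.2 + m3 * ak.2)))).
    ring.
  by rewrite e1' mulr0 sub0r.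
have hal : `|al| <= psi.
  rewrite ler_norml /al; apply/andP; split; lra.
rewrite mulrC -[X in X <= _]opprK -key.
apply: le_trans (ler_norm _) _.
rewrite normrN normrM mulrC.
apply: ler_wpM2l => //.
Qed.
Lemma FTC_poly (R : realType) (F f : R -> R) (a b : R) : a < b ->
  (forall x : R, is_derive x (1:R) F (f x)) -> continuous f ->
  (\int[lebesgue_measure]_(x in `[a, b]) (f x)%:E = (F b - F a)%:E)%E.
Proof.
move=> ab dF cf.
have cF : continuous F.
  move=> x; apply: differentiable_continuous.
  apply/derivable1_diffP; exact: (@ex_derive _ _ _ _ _ _ _ (dF x)).
rewrite (@continuous_FTC2 _ f F) //.
- by apply: continuous_subspaceT => x; exact: cf.
- split.
  + by move=> x _; exact: (@ex_derive _ _ _ _ _ _ _ (dF x)).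
  + exact: cvg_at_right_filter (cF a).
  + exact: cvg_at_left_filter (cF b).
- by move=> x _; rewrite derive1E; exact: (@derive_val _ _ _ _ _ _ _ (dF x)).
Qed.

Lemma cont_of_der (R : realType) (g dg : R -> R) :
  (forall x : R, is_derive x (1:R) g (dg x)) -> continuous g.
Proof.
move=> dF x; apply: differentiable_continuous.
apply/derivable1_diffP; exact: (@ex_derive _ _ _ _ _ _ _ (dF x)).
Qed.

Lemma scaleRE (R : realType) (u v : R) : u *: v = u * v.
Proof. by []. Qed.

Lemma int_up (R : realType) (a b c : R) : a < b ->
  (\int[lebesgue_measure]_(s in `[a, b]) (c * (s - a) / (b - a))%:E = (c * (b - a) / 2)%:E)%E.
Proof.
move=> ab.
have hd : forall x : R, is_derive x (1:R) (fun s => c / (b - a) / 2 * (s - a) ^+ 2) (c * (x - a) / (b - a)).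
  move=> x; apply: is_derive_eq; rewrite !scaleRE; field; lra.
have hc : continuous (fun s : R => c * (s - a) / (b - a)).
  apply: (@cont_of_der _ _ (fun _ => c / (b - a))) => x.
  apply: is_derive_eq; rewrite !scaleRE; field; lra.
rewrite (@FTC_poly _ (fun s => c / (b - a) / 2 * (s - a) ^+ 2) (fun s => c * (s - a) / (b - a)) a b ab hd hc).
congr EFin; rewrite subrr expr0n /= mulr0 subr0. field. lra.
Qed.

Lemma int_down (R : realType) (a b c : R) : a < b ->
  (\int[lebesgue_measure]_(s in `]a, b]) (c * (b - s) / (b - a))%:E = (c * (b - a) / 2)%:E)%E.
Proof.
move=> ab.
have hd : forall x : R, is_derive x (1:R) (fun s => - (c / (b - a) / 2) * (b - s) ^+ 2) (c * (b - x) / (b - a)).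
  move=> x; apply: is_derive_eq; rewrite !scaleRE; field; lra.
have hc : continuous (fun s : R => c * (b - s) / (b - a)).
  apply: (@cont_of_der _ _ (fun _ => - (c / (b - a)))) => x.
  apply: is_derive_eq; rewrite !scaleRE; field; lra.
rewrite integral_itv_obnd_cbnd; last first.
  by apply/measurable_EFinP; apply: measurable_funTS; exact: continuous_measurable_fun.
rewrite (@FTC_poly _ (fun s => - (c / (b - a) / 2) * (b - s) ^+ 2) (fun s => c * (b - s) / (b - a)) a b ab hd hc).
congr EFin; rewrite subrr expr0n /= mulr0 sub0r. field. lra.
Qed.
Lemma tri_fst (R : realType) (ai aj ak : R * R) (s y : R) :
  ai.1 <= aj.1 -> aj.1 <= ak.1 -> triangle ai aj ak (s, y) ->
  exists l1 l2 l3 : R, [/\ 0 <= l1, 0 <= l2, 0 <= l3 & l1 + l2 + l3 = 1] /\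
    [/\ (s, y) = l1 *: ai + l2 *: aj + l3 *: ak,
    s = l1 * ai.1 + l2 * aj.1 + l3 * ak.1 & ai.1 <= s <= ak.1].
Proof.
move=> hij hjk [l1 [l2 [l3 [h1 h2 h3 hs ep]]]].
have es : s = l1 * ai.1 + l2 * aj.1 + l3 * ak.1 by have := congr1 fst ep.
exists l1, l2, l3; split => //; split => //.
have l1e : l1 = 1 - l2 - l3 by lra.
rewrite es l1e; apply/andP; split; nra.
Qed.

Arguments tri_fst {R ai aj ak s y}.

Lemma area_sorted (R : realType) (ai aj ak : R * R) :
  ai.1 <= aj.1 -> aj.1 <= ak.1 -> det2 (aj - ai) (ak - ai) != 0 ->
  forall B : set (measurableTypeR R * measurableTypeR R), measurable B -> B `<=` triangle ai aj ak ->
  ((@leb2 R) B <= (`|det2 (aj - ai) (ak - ai)| / 2)%:E)%E.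
Proof.
move=> hij hjk hD B mB BT.
have xik : ai.1 < ak.1.
  rewrite lt_neqAle (le_trans hij hjk) andbT; apply/eqP => e.
  move/eqP: hD; apply; rewrite /det2 /=.
  have e2 : aj.1 = ai.1 by lra.
  rewrite e2 -e; ring.
set D := det2 (aj - ai) (ak - ai).
set c := `|D| / (ak.1 - ai.1).
have c0 : 0 <= c by rewrite divr_ge0 // ?normr_ge0 // subr_ge0 ltW.
have chord : forall s y y' (psi : R), B (s, y) -> B (s, y') ->
   (forall l1 l2 l3 : R, 0 <= l1 -> 0 <= l2 -> 0 <= l3 -> l1 + l2 + l3 = 1 ->
       s = l1 * ai.1 + l2 * aj.1 + l3 * ak.1 -> l2 <= psi) ->
   y - y' <= c * psi.
  move=> s y y' psi By By' hpsi.
  have [l1 [l2 [l3 [[h1 h2 h3 hs] [ep es _]]]]] := tri_fst hij hjk (BT _ By).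
  have [m1 [m2 [m3 [[g1 g2 g3 gs] [eq eqs _]]]]] := tri_fst hij hjk (BT _ By').
  have := @chord_core R ai aj ak l1 l2 l3 m1 m2 m3 psi hs gs h2 g2
    (hpsi _ _ _ h1 h2 h3 hs es) (hpsi _ _ _ g1 g2 g3 gs eqs) (ltW xik).
  rewrite -ep -eq /= => /(_ erefl) H.
  rewrite /c mulrAC ler_pdivlMr ?subr_gt0 //.
have outside : forall s, ~ (ai.1 <= s <= ak.1) -> xsection B s = set0.
  move=> s hs; apply/seteqP; split => // y; rewrite /xsection /= inE => Bsy.
  have [l1 [l2 [l3 [_ [_ _ r]]]]] := tri_fst hij hjk (BT _ Bsy).
  by exfalso; apply: hs.
have mg := measurable_fun_xsection (@lebesgue_measure R) mB.
have -> : leb2 B = (\int[lebesgue_measure]_(s in `[ai.1, aj.1] `|` `]aj.1, ak.1])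
            lebesgue_measure (xsection B s))%E.
  rewrite /leb2 /product_measure1 /= (integral_mkcond (_ `|` _)).
  apply: eq_integral => s _; rewrite /patch; case: ifPn => // hs.
  rewrite outside ?measure0 // => /andP[h1 h2]; move: hs; rewrite notin_setE; apply.
  have [h3|h3] := leP s aj.1.
    by left; rewrite /= in_itv /= h1 h3.
  by right; rewrite /= in_itv /= h2 h3.
rewrite ge0_integral_setU //; last 2 first.
- exact: measurable_funS mg.
- rewrite /disj_set; apply/eqP; apply/seteqP; split => // s [] /=.
  by rewrite !in_itv /= => /andP[_ h1] /andP[h2 _]; lra.
have Hinf : forall a : R, (\int[lebesgue_measure]_(s in `[a, a]) lebesgue_measure (xsection B s) <= 0%:E)%E /\
    (\int[lebesgue_measure]_(s in `]a, a]) lebesgue_measure (xsection B s) <= 0%:E)%E.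
  move=> a; split.
  - apply: le_trans (_ : _ <= \int[lebesgue_measure]_(s in `[a, a]) (cst +oo%E) s)%E _.
      apply: ge0_le_integral => //.
      + exact: (measurable_funS measurableT (@subsetT _ _) mg).
      + by move=> s _; exact: leey.
    rewrite integral_cst //; set m := (X in (+oo * X)%E).
    have -> : m = 0%E.
      have := @lebesgue_measure_itv R `[a, a]; rewrite /= lte_fin ltxx; exact.
    by rewrite mule0.
  - apply: le_trans (_ : _ <= \int[lebesgue_measure]_(s in `]a, a]) (cst +oo%E) s)%E _.
      apply: ge0_le_integral => //.
      + exact: (measurable_funS measurableT (@subsetT _ _) mg).
      + by move=> s _; exact: leey.
    rewrite integral_cst //; set m := (X in (+oo * X)%E).
    have -> : m = 0%E.
      have := @lebesgue_measure_itv R `]a, a]; rewrite /= lte_fin ltxx; exact.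
    by rewrite mule0.
have P1 : (\int[lebesgue_measure]_(s in `[ai.1, aj.1]) lebesgue_measure (xsection B s)
           <= (c * (aj.1 - ai.1) / 2)%:E)%E.
  move: (hij); rewrite le_eqVlt => /orP[/eqP e|lt].
    by rewrite -e subrr mulr0 mul0r; exact: (Hinf _).1.
  apply: le_trans (_ : _ <= \int[lebesgue_measure]_(s in `[ai.1, aj.1])
          (c * (s - ai.1) / (aj.1 - ai.1))%:E)%E _; last by rewrite int_up.
  apply: ge0_le_integral => //.
  - exact: (measurable_funS measurableT (@subsetT _ _) mg).
  - apply/measurable_EFinP; apply: measurable_funM => //; apply: measurable_funM => //.
    exact: measurable_funB.
  move=> s; rewrite /= in_itv /= => /andP[h1 h2].
  rewrite -mulrA; apply: sec_bound.
  - exact: measurable_xsection.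
  - by rewrite mulr_ge0 // divr_ge0 // subr_ge0 // ltW.
  move=> y y'; rewrite /xsection /= !inE => By By'.
  apply: chord By By' _ => l1 l2 l3 g1 g2 g3 gs es.
  rewrite ler_pdivlMr ?subr_gt0 //.
  have e3 : s - ai.1 = l2 * (aj.1 - ai.1) + l3 * (ak.1 - ai.1).
    have el1 : l1 = 1 - l2 - l3 by lra.
    rewrite es el1; ring.
  have : 0 <= l3 * (ak.1 - ai.1) by rewrite mulr_ge0 // subr_ge0 ltW.
  lra.
have P2 : (\int[lebesgue_measure]_(s in `]aj.1, ak.1]) lebesgue_measure (xsection B s)
           <= (c * (ak.1 - aj.1) / 2)%:E)%E.
  move: (hjk); rewrite le_eqVlt => /orP[/eqP e|lt].
    by rewrite -e subrr mulr0 mul0r; exact: (Hinf _).2.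
  apply: le_trans (_ : _ <= \int[lebesgue_measure]_(s in `]aj.1, ak.1])
          (c * (ak.1 - s) / (ak.1 - aj.1))%:E)%E _; last by rewrite int_down.
  apply: ge0_le_integral => //.
  - exact: (measurable_funS measurableT (@subsetT _ _) mg).
  - apply/measurable_EFinP; apply: measurable_funM => //; apply: measurable_funM => //.
    exact: measurable_funB.
  move=> s; rewrite /= in_itv /= => /andP[h1 h2].
  rewrite -mulrA; apply: sec_bound.
  - exact: measurable_xsection.
  - by rewrite mulr_ge0 // divr_ge0 // subr_ge0 // ltW.
  move=> y y'; rewrite /xsection /= !inE => By By'.
  apply: chord By By' _ => l1 l2 l3 g1 g2 g3 gs es.
  rewrite ler_pdivlMr ?subr_gt0 //.
  have e3 : ak.1 - s = l1 * (ak.1 - ai.1) + l2 * (ak.1 - aj.1).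
    have el3 : l3 = 1 - l1 - l2 by lra.
    rewrite es el3; ring.
  have : 0 <= l1 * (ak.1 - ai.1) by rewrite mulr_ge0 // subr_ge0 ltW.
  lra.
apply: le_trans (leeD P1 P2) _.
rewrite -EFinD lee_fin /c le_eqVlt; apply/orP; left; apply/eqP.
field; rewrite subr_eq0; apply/eqP => e; move: xik; rewrite e ltxx.
done.
Qed.

Lemma tri_sw12 (R : realType) (ai aj ak : R * R) :
  triangle ai aj ak `<=` triangle aj ai ak.
Proof.
move=> x [l1 [l2 [l3 [h1 h2 h3 hs ->]]]]; exists l2, l1, l3; split => //.
  by rewrite (addrC l2).
by rewrite (addrC (l2 *: aj)).
Qed.

Lemma tri_sw23 (R : realType) (ai aj ak : R * R) :
  triangle ai aj ak `<=` triangle ai ak aj.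
Proof.
move=> x [l1 [l2 [l3 [h1 h2 h3 hs ->]]]]; exists l1, l3, l2; split => //.
  by rewrite -addrA (addrC l3) addrA.
by rewrite -!addrA (addrC (l2 *: aj)).
Qed.

Definition Parea {R : realType} (a b c : R * R) :=
  det2 (b - a) (c - a) != 0 ->
  forall B : set (measurableTypeR R * measurableTypeR R), measurable B -> B `<=` triangle a b c ->
  ((@leb2 R) B <= (`|det2 (b - a) (c - a)| / 2)%:E)%E.

Lemma Parea12 (R : realType) (a b c : R * R) : Parea a b c -> Parea b a c.
Proof.
have e : det2 (a - b) (c - b) = - det2 (b - a) (c - a) by rewrite /det2 /=; ring.
move=> P; rewrite /Parea e normrN oppr_eq0 => hD B mB BT.
by apply: P => //; apply: subset_trans BT _; exact: tri_sw12.
Qed.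

Lemma Parea23 (R : realType) (a b c : R * R) : Parea a b c -> Parea a c b.
Proof.
have e : det2 (c - a) (b - a) = - det2 (b - a) (c - a) by rewrite /det2 /=; ring.
move=> P; rewrite /Parea e normrN oppr_eq0 => hD B mB BT.
by apply: P => //; apply: subset_trans BT _; exact: tri_sw23.
Qed.

Lemma area_gen (R : realType) (ai aj ak : R * R) : Parea ai aj ak.
Proof.
have S := @area_sorted R.
have [hij|hji] := leP ai.1 aj.1; have [hjk|hkj] := leP aj.1 ak.1;
  have [hik|hki] := leP ai.1 ak.1.
- exact: S.
- exact: S.
- apply: Parea23; apply: S => //; exact: ltW.
- apply: Parea23; apply: Parea12; apply: S => //; exact: ltW.
- apply: Parea12; apply: S => //; exact: ltW.
- apply: Parea12; apply: Parea23; apply: S => //; exact: ltW.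
- exfalso; move: hkj hji hik; lra.
- apply: Parea12; apply: Parea23; apply: Parea12; apply: S => //; exact: ltW.
Qed.
Lemma derive_aff (R : realType) (f : R * R -> R) (x v : R * R) (c : R) :
  (forall h : R, f (x + h *: v) = f x + h * c) -> 'D_v f x = c.
Proof.
move=> hf; rewrite /derive; apply: cvg_lim => //.
apply: cvg_near_cst; near=> h.
rewrite /= (addrC (h *: v)) hf addrAC subrr add0r scaleRE mulrA mulVf ?mul1r //.
near: h; exact: nbhs_dnbhs_neq.
Unshelve. all: by end_near.
Qed.

Section Grad.
Variable R : realType.
Implicit Types (ai aj ak x v : R * R).

Definition gx ai aj ak (fi fj fk : R) :=
  (fi * (aj.2 - ak.2) + fj * (ak.2 - ai.2) + fk * (ai.2 - aj.2)) / det2 (aj - ai) (ak - ai).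
Definition gy ai aj ak (fi fj fk : R) :=
  (fi * (ak.1 - aj.1) + fj * (ai.1 - ak.1) + fk * (aj.1 - ai.1)) / det2 (aj - ai) (ak - ai).

Lemma det_cyc1 ai aj ak : det2 (ak - aj) (ai - aj) = det2 (aj - ai) (ak - ai).
Proof. rewrite /det2 /=; ring. Qed.
Lemma det_cyc2 ai aj ak : det2 (ai - ak) (aj - ak) = det2 (aj - ai) (ak - ai).
Proof. rewrite /det2 /=; ring. Qed.

Lemma dets_nz ai aj ak : det2 (aj - ai) (ak - ai) != 0 ->
  ((ak.1 - aj.1) * (ai.2 - aj.2) - (ak.2 - aj.2) * (ai.1 - aj.1) != 0) /\
  ((ai.1 - ak.1) * (aj.2 - ak.2) - (ai.2 - ak.2) * (aj.1 - ak.1) != 0).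
Proof.
move=> hD; have e1 := det_cyc1 ai aj ak; have e2 := det_cyc2 ai aj ak.
by rewrite /det2 /= in e1 e2; rewrite e1 e2.
Qed.

Lemma p1_aff ai aj ak fi fj fk x v (h : R) : det2 (aj - ai) (ak - ai) != 0 ->
  p1 ai aj ak fi fj fk (x + h *: v) =
  p1 ai aj ak fi fj fk x + h * (v.1 * gx ai aj ak fi fj fk + v.2 * gy ai aj ak fi fj fk).
Proof.
move=> hD; rewrite /p1 /bary /gx /gy /det2 /=.
rewrite ?scaleRE.
have [h1 h2] := dets_nz _ _ _ hD.
rewrite /det2 in hD.
by field; rewrite ?hD ?h1 ?h2.
Qed.

Lemma grad_p1 ai aj ak fi fj fk x : det2 (aj - ai) (ak - ai) != 0 ->
  grad2 (p1 ai aj ak fi fj fk) x = (gx ai aj ak fi fj fk, gy ai aj ak fi fj fk).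
Proof.
move=> hD; rewrite /grad2; congr pair; apply: derive_aff => h; rewrite p1_aff //= ; ring.
Qed.

Lemma bary_tri ai aj ak (l1 l2 l3 : R) : det2 (aj - ai) (ak - ai) != 0 ->
  l1 + l2 + l3 = 1 ->
  forall fi fj fk, p1 ai aj ak fi fj fk (l1 *: ai + l2 *: aj + l3 *: ak) =
    l1 * fi + l2 * fj + l3 * fk.
Proof.
move=> hD hs fi fj fk; have el1 : l1 = 1 - l2 - l3 by lra.
rewrite /p1 /bary /det2 /= ?scaleRE.
have [h1 h2] := dets_nz _ _ _ hD.
rewrite /det2 in hD.
by rewrite el1; field; rewrite ?hD ?h1 ?h2.
Qed.
End Grad.
Arguments gx {R}.
Arguments gy {R}.

Section Trig.
Variable R : realType.
Implicit Types (a b c p q : R * R).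

Lemma lagrange p q : dot2 p q ^+ 2 + det2 p q ^+ 2 = dot2 p p * dot2 q q.
Proof. rewrite /dot2 /det2; ring. Qed.

Lemma dot_ge0 p : 0 <= dot2 p p.
Proof. rewrite /dot2; nra. Qed.

Lemma norm2_sq p : norm2 p ^+ 2 = dot2 p p.
Proof. by rewrite /norm2 sqr_sqrtr // dot_ge0. Qed.

Lemma norm2_gt0 p q : det2 p q != 0 -> 0 < norm2 p /\ 0 < norm2 q.
Proof.
move=> hD.
have h := lagrange p q.
have d2 : 0 < det2 p q ^+ 2 by rewrite exprn_even_gt0.
have hp := dot_ge0 p; have hq := dot_ge0 q.
have hpq : 0 < dot2 p p * dot2 q q by rewrite -h; have := sqr_ge0 (dot2 p q); lra.
have pp : 0 < dot2 p p.
  by rewrite lt_neqAle hp andbT; apply: contraTneq hpq => <-; rewrite mul0r ltxx.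
have qq : 0 < dot2 q q.
  by rewrite lt_neqAle hq andbT; apply: contraTneq hpq => <-; rewrite mulr0 ltxx.
by rewrite /norm2 !sqrtr_gt0.
Qed.

Lemma sin_angle a b c : det2 (b - a) (c - a) != 0 ->
  sin (angle_at a b c) = `|det2 (b - a) (c - a)| / (norm2 (b - a) * norm2 (c - a)).
Proof.
move=> hD; rewrite /angle_at.
have [np nq] := norm2_gt0 _ _ hD.
set p := b - a; set q := c - a.
set N := norm2 p * norm2 q.
have N0 : 0 < N by rewrite mulr_gt0.
have NN : N ^+ 2 = dot2 p q ^+ 2 + det2 p q ^+ 2 by rewrite exprMn !norm2_sq lagrange.
have H : (dot2 p q / N) ^+ 2 + (det2 p q / N) ^+ 2 = 1.
  by rewrite !expr_div_n -mulrDl -NN divff // expf_neq0 // gt_eqF.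
have t1 : -1 <= dot2 p q / N <= 1.
  have t2 : (dot2 p q / N) ^+ 2 <= 1 by have := sqr_ge0 (det2 p q / N); lra.
  move: t2; set t := dot2 p q / N => t2.
  have := sqr_ge0 (t - 1); have := sqr_ge0 (t + 1).
  rewrite !sqrrD !sqrrN => ha hb; apply/andP; split; nra.
rewrite sin_acos // (_ : 1 - _ = (det2 p q / N) ^+ 2); last by rewrite -H addrAC subrr add0r.
by rewrite sqrtr_sqr normrM normfV (gtr0_norm N0).
Qed.

Lemma acute_dot a b c t_min t_max : det2 (b - a) (c - a) != 0 ->
  0 < t_min -> t_max < pi / 2 -> t_min <= angle_at a b c <= t_max ->
  0 < dot2 (b - a) (c - a).
Proof.
move=> hD tmin tmax /andP[h1 h2].
have [np nq] := norm2_gt0 _ _ hD.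
set p := b - a; set q := c - a.
set N := norm2 p * norm2 q.
have N0 : 0 < N by rewrite mulr_gt0.
have NN : N ^+ 2 = dot2 p q ^+ 2 + det2 p q ^+ 2 by rewrite exprMn !norm2_sq lagrange.
have H : (dot2 p q / N) ^+ 2 + (det2 p q / N) ^+ 2 = 1.
  by rewrite !expr_div_n -mulrDl -NN divff // expf_neq0 // gt_eqF.
have t1 : -1 <= dot2 p q / N <= 1.
  have t2 : (dot2 p q / N) ^+ 2 <= 1 by have := sqr_ge0 (det2 p q / N); lra.
  move: t2; set t := dot2 p q / N => t2.
  have := sqr_ge0 (t - 1); have := sqr_ge0 (t + 1).
  rewrite !sqrrD !sqrrN => ha hb; apply/andP; split; nra.
have hc : 0 < cos (angle_at a b c).
  apply: cos_gt0_pihalf; apply/andP; split; last lra.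
  have := pi_gt0 R; lra.
move: hc; rewrite /angle_at -/p -/q -/N acosK; last by rewrite in_itv.
by rewrite pmulr_lgt0 // invr_gt0.
Qed.
End Trig.

Section Extract.
Variable R : realType.

Lemma delta_ge (a b c : R) :
  [/\ `|a - b| <= deltaT a b c, `|a - c| <= deltaT a b c & `|b - c| <= deltaT a b c].
Proof.
by rewrite /deltaT !big_cons !big_nil !le_max !lexx !orbT.
Qed.

Lemma rT_prop (x y z : R) : 0 < x -> 0 < y -> 0 < z ->
  let m := \big[Num.min/1]_(p <- [:: x; y; z]) \big[Num.min/1]_(q <- [:: x; y; z]) (p / q) in
  [/\ 0 < m, m <= x / z & m <= z / x].
Proof.
move=> x0 y0 z0 m; rewrite /m !big_cons !big_nil.
split.
- by rewrite !lt_min ?ltr01 ?divr_gt0.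
- by rewrite !ge_min lexx !orbT.
- by rewrite !ge_min lexx !orbT.
Qed.

Lemma final_ineq (K dw du D sj r cc nA nB : R) :
  0 < K -> 0 <= dw -> 0 <= du -> D != 0 -> 0 < nA -> 0 < nB ->
  sj = `|D| / (nA * nB) -> 0 < r -> r * nA <= nB ->
  `|cc| <= du * nA ^+ 2 / D ^+ 2 ->
  (- (dw * du) / (2 * sj)) * (7 * K / 6) * (1 + r^-1) <= - ((K * dw * `|cc|) * (`|D| / 2)).
Proof.
move=> K0 dw0 du0 D0 nA0 nB0 -> r0 rn hc.
set Da := `|D|.
have Da0 : 0 < Da by rewrite normr_gt0.
have D2 : D ^+ 2 = Da ^+ 2 by rewrite /Da real_normK // num_real.
set rho := r^-1.
have rho0 : 0 < rho by rewrite invr_gt0.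
have rr : r * rho = 1 by rewrite /rho mulfV // gt_eqF.
have s2 : nA <= nB * rho.
  by rewrite -[nA]mul1r -rr mulrAC ler_wpM2r // ltW.
set P := du / Da.
have P0 : 0 <= P by rewrite divr_ge0 // ltW.
have s1 : `|cc| * Da <= P * nA ^+ 2.
  rewrite D2 in hc.
  have := ler_wpM2r (ltW Da0) hc.
  move=> /le_trans; apply; rewrite /P le_eqVlt; apply/orP; left; apply/eqP.
  field; rewrite gt_eqF //.
have s3 : nA ^+ 2 <= nA * nB * (7 / 6 * (1 + rho)).
  rewrite expr2 -mulrA ler_wpM2l ?ltW //.
  by apply: le_lt_trans s2 _; rewrite ltr_pM2l //; lra.
have LHS : - (dw * du) / (2 * (Da / (nA * nB))) * (7 * K / 6) * (1 + rho)
    = - (K * dw * P * (nA * nB * (7 / 6 * (1 + rho))) / 2).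
  rewrite /P; field; rewrite ?gt_eqF //.
rewrite LHS lerN2.
have e : K * dw * `|cc| * (Da / 2) = K * dw * (`|cc| * Da) / 2 by rewrite !mulrA mulrAC.
rewrite e ler_pM2r ?invr_gt0 ?ltr0n //.
rewrite -[X in _ <= X]mulrA; apply: ler_wpM2l; first by rewrite mulr_ge0 // ltW.
apply: le_trans s1 _; rewrite ler_wpM2l //.
Qed.
End Extract.

Section CBound.
Variable R : realType.
Implicit Types (ai aj ak : R * R).

Lemma abs_comb (a b x y du : R) : 0 <= x -> 0 <= y -> `|a| <= du -> `|b| <= du ->
  `|a * x + b * y| <= du * (x + y).
Proof.
move=> x0 y0 ha hb; apply: le_trans (ler_normD _ _) _.
rewrite !normrM (ger0_norm x0) (ger0_norm y0) mulrDr.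
by apply: lerD; apply: ler_wpM2r.
Qed.

Lemma cbound_A ai aj ak (ui uj uk du : R) : det2 (aj - ai) (ak - ai) != 0 ->
  0 <= dot2 (ai - ak) (aj - ak) -> 0 <= dot2 (ak - aj) (ai - aj) ->
  `|ui - uj| <= du -> `|ui - uk| <= du ->
  `|gx ai aj ak ui uj uk * gx ai aj ak 1 0 0 + gy ai aj ak ui uj uk * gy ai aj ak 1 0 0|
    <= du * norm2 (ak - aj) ^+ 2 / det2 (aj - ai) (ak - ai) ^+ 2.
Proof.
move=> hD dK dJ h1 h2.
have e : gx ai aj ak ui uj uk * gx ai aj ak 1 0 0 + gy ai aj ak ui uj uk * gy ai aj ak 1 0 0
  = ((ui - uj) * dot2 (ai - ak) (aj - ak) + (ui - uk) * dot2 (ak - aj) (ai - aj)) /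
     det2 (aj - ai) (ak - ai) ^+ 2.
  rewrite /gx /gy /dot2 /=; move: hD; rewrite /det2 /= => hD; field; exact: hD.
rewrite e normrM normfV (ger0_norm (sqr_ge0 _)) ler_pM2r; last first.
  by rewrite invr_gt0 exprn_even_gt0.
rewrite norm2_sq (_ : dot2 (ak - aj) (ak - aj) = dot2 (ai - ak) (aj - ak) + dot2 (ak - aj) (ai - aj)).
  exact: abs_comb.
rewrite /dot2 /=; ring.
Qed.

Lemma cbound_B ai aj ak (ui uj uk du : R) : det2 (aj - ai) (ak - ai) != 0 ->
  0 <= dot2 (ak - aj) (ai - aj) -> 0 <= dot2 (aj - ai) (ak - ai) ->
  `|ui - uk| <= du -> `|uj - uk| <= du ->
  `|gx ai aj ak ui uj uk * gx ai aj ak 1 1 0 + gy ai aj ak ui uj uk * gy ai aj ak 1 1 0|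
    <= du * norm2 (ai - aj) ^+ 2 / det2 (aj - ai) (ak - ai) ^+ 2.
Proof.
move=> hD dJ dI h1 h2.
have e : gx ai aj ak ui uj uk * gx ai aj ak 1 1 0 + gy ai aj ak ui uj uk * gy ai aj ak 1 1 0
  = ((ui - uk) * dot2 (ak - aj) (ai - aj) + (uj - uk) * dot2 (aj - ai) (ak - ai)) /
     det2 (aj - ai) (ak - ai) ^+ 2.
  rewrite /gx /gy /dot2 /=; move: hD; rewrite /det2 /= => hD; field; exact: hD.
rewrite e normrM normfV (ger0_norm (sqr_ge0 _)) ler_pM2r; last first.
  by rewrite invr_gt0 exprn_even_gt0.
rewrite norm2_sq (_ : dot2 (ai - aj) (ai - aj) = dot2 (ak - aj) (ai - aj) + dot2 (aj - ai) (ak - ai)).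
  exact: abs_comb.
rewrite /dot2 /=; ring.
Qed.
End CBound.
Lemma norm2N (R : realType) (a b : R * R) : norm2 (a - b) = norm2 (b - a).
Proof. by rewrite /norm2 /dot2 /=; congr Num.sqrt; ring. Qed.

Theorem lemma4p7 (R : realType) (Omega : set (R * R))
  (A : R * R -> R -> R * R -> R) (b : R * R -> R -> R)
  (gam_a K_eta B_eta t_min t_max : R)
  (ai aj ak : R * R) (wi wj wk ui uj uk : R) (zi zj zk : R -> R) :
  hypS Omega A b gam_a K_eta B_eta ->
  0 < t_min -> t_min <= t_max -> t_max < pi / 2 ->
  det2 (aj - ai) (ak - ai) != 0 ->
  triangle ai aj ak `<=` Omega ->
  t_min <= angle_at ai aj ak <= t_max ->
  t_min <= angle_at aj ak ai <= t_max ->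
  t_min <= angle_at ak ai aj <= t_max ->
  wj <= wi -> wk <= wj -> 0 < wi -> wk <= 0 ->
  let w := p1 ai aj ak wi wj wk in
  let u := p1 ai aj ak ui uj uk in
  let v := p1 ai aj ak (if 0 < wi then 1 else 0) (if 0 < wj then 1 else 0)
                       (if 0 < wk then 1 else 0) in
  let z := fun t : R => p1 ai aj ak (zi t) (zj t) (zk t) in
  let theta_j := angle_at aj ak ai in
  (((- (deltaT wi wj wk * deltaT ui uj uk) / (2 * sin theta_j))
     * (7 * K_eta / 6) * (1 + (rT ai aj ak)^-1))%R%:E
  <= \int[@leb2 R]_(x in triangle ai aj ak)
        \int[@lebesgue_measure R]_(t in `[0%R, 1%R])
          (derive1 (fun e => A x e (grad2 u x)) (z t x) * w x
             * dot2 (grad2 u x) (grad2 v x))%:E)%E.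
Proof.
move=> hS tmin0 tminmax tmaxpi hD Tsub aI aJ aK hji hkj wi0 wk0.
cbv zeta.
set w := p1 ai aj ak wi wj wk.
set u := p1 ai aj ak ui uj uk.
set v := p1 ai aj ak _ _ _.
set thj := angle_at aj ak ai.
case: hS => [[g0 K0 B0] _ _ hae].
case: hae => N [mN N0 hN].
set D := det2 (aj - ai) (ak - ai).
pose vj : R := if 0 < wj then 1 else 0.
have vi1 : (if 0 < wi then 1 else 0) = 1 :> R by rewrite wi0.
have vk0 : (if 0 < wk then 1 else 0) = 0 :> R by rewrite ltNge wk0.
have gu : forall x, grad2 u x = (gx ai aj ak ui uj uk, gy ai aj ak ui uj uk).
  by move=> x; rewrite /u grad_p1.
have gv : forall x, grad2 v x = (gx ai aj ak 1 vj 0, gy ai aj ak 1 vj 0).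
  by move=> x; rewrite /v grad_p1 // vi1 vk0.
set cc := gx ai aj ak ui uj uk * gx ai aj ak 1 vj 0 + gy ai aj ak ui uj uk * gy ai aj ak 1 vj 0.
have ecc : forall x, dot2 (grad2 u x) (grad2 v x) = cc by move=> x; rewrite gu gv.
set dw := deltaT wi wj wk.
set du := deltaT ui uj uk.
have [dwij dwik dwjk] := @delta_ge R wi wj wk.
have [duij duik dujk] := @delta_ge R ui uj uk.
have dw0 : 0 <= dw by apply: le_trans dwij; exact: normr_ge0.
have du0 : 0 <= du by apply: le_trans duij; exact: normr_ge0.
set M := K_eta * dw * `|cc|.
have M0 : 0 <= M by rewrite mulr_ge0 // mulr_ge0 // ltW.
have Fin : ((- (dw * du) / (2 * sin thj)) * (7 * K_eta / 6) * (1 + (rT ai aj ak)^-1))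
             <= - (M * (`|D| / 2)).
  have hDJ : det2 (ak - aj) (ai - aj) != 0 by rewrite det_cyc1.
  have hDK : det2 (ai - ak) (aj - ak) != 0 by rewrite det_cyc2.
  set nIJ := norm2 (ai - aj); set nJK := norm2 (ak - aj); set nIK := norm2 (ai - ak).
  have [nIJ0 nIK0] : 0 < nIJ /\ 0 < nIK.
    by have [h1 h2] := @norm2_gt0 R _ _ hD; rewrite /nIJ /nIK norm2N [norm2 (ai - ak)]norm2N.
  have nJK0 : 0 < nJK by have [h1 _] := @norm2_gt0 R _ _ hDJ.
  have Da0 : 0 < `|D| by rewrite normr_gt0.
  have sI : sin (angle_at ai aj ak) = `|D| / (nIJ * nIK).
    by rewrite sin_angle // -/D /nIJ /nIK norm2N [norm2 (ai - ak)]norm2N.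
  have sJ : sin thj = `|D| / (nJK * nIJ).
    by rewrite /thj sin_angle // det_cyc1 -/D.
  have sK : sin (angle_at ak ai aj) = `|D| / (nIK * nJK).
    by rewrite sin_angle // det_cyc2 -/D (norm2N _ aj ak).
  have sI0 : 0 < sin (angle_at ai aj ak) by rewrite sI divr_gt0 // mulr_gt0.
  have sJ0 : 0 < sin (angle_at aj ak ai) by rewrite -/thj sJ divr_gt0 // mulr_gt0.
  have sK0 : 0 < sin (angle_at ak ai aj) by rewrite sK divr_gt0 // mulr_gt0.
  have [r0 r1 r2] : [/\ 0 < rT ai aj ak,
      rT ai aj ak <= sin (angle_at ai aj ak) / sin (angle_at ak ai aj) &
      rT ai aj ak <= sin (angle_at ak ai aj) / sin (angle_at ai aj ak)] :=
    @rT_prop R _ _ _ sI0 sJ0 sK0.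
  have rIK : sin (angle_at ai aj ak) / sin (angle_at ak ai aj) = nJK / nIJ.
    rewrite sI sK; field; rewrite ?gt_eqF //.
  have rKI : sin (angle_at ak ai aj) / sin (angle_at ai aj ak) = nIJ / nJK.
    rewrite sI sK; field; rewrite ?gt_eqF //.
  have dI := @acute_dot R _ _ _ _ _ hD tmin0 tmaxpi aI.
  have dJ := @acute_dot R _ _ _ _ _ hDJ tmin0 tmaxpi aJ.
  have dK := @acute_dot R _ _ _ _ _ hDK tmin0 tmaxpi aK.
  case: (ltP 0 wj) => hwj.
  - have hc : `|cc| <= du * nIJ ^+ 2 / D ^+ 2.
      rewrite /cc /vj hwj; apply: cbound_B => //; exact: ltW.
    apply: (@final_ineq R _ _ _ _ _ _ _ _ _ K0 dw0 du0 hD nIJ0 nJK0 _ r0 _ hc).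
      by rewrite sJ (mulrC nJK).
    by rewrite -ler_pdivlMr // -rIK.
  - have hc : `|cc| <= du * nJK ^+ 2 / D ^+ 2.
      rewrite /cc /vj ltNge hwj /=; apply: cbound_A => //; exact: ltW.
    apply: (@final_ineq R _ _ _ _ _ _ _ _ _ K0 dw0 du0 hD nJK0 nIJ0 _ r0 _ hc).
      by rewrite sJ.
    by rewrite -ler_pdivlMr // -rKI.
apply: le_trans (_ : (- (M * (`|D| / 2)))%:E <= _)%E; first by rewrite lee_fin.
apply: (lowerL _ _ _ _ _ _ M0 mN N0) => [x Tx Nx | B mB BT]; last first.
  exact: (@area_gen R ai aj ak hD B mB BT).
have Px := contra_notP (fun nP => hN x nP) Nx.
have [_ [Kb _]] := Px (Tsub _ Tx).
have wx : `|w x| <= dw.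
  case: Tx => [l1 [l2 [l3 [h1 h2 h3 hs ex]]]].
  rewrite /w ex bary_tri //.
  apply: le_trans dwik; apply: le_trans (ler_norm _).
  rewrite ler_norml; apply/andP; split; nra.
apply: le_trans (_ : (- (M * 1))%:E <= _)%E; first by rewrite mulr1.
apply: (lowerL _ _ _ _ _ _ M0 measurable0 (measure0 _)) => [t _ _ | B' mB' BT'].
  rewrite lee_fin ecc.
  set d := derive1 _ _.
  have hd : `|d| <= K_eta := Kb _ _.
  have : `|d * w x * cc| <= M.
    rewrite !normrM /M; apply: ler_wpM2r => //.
    by apply: ler_pM => //; exact: normr_ge0.
  by rewrite ler_norml => /andP[].
apply: (@le_trans _ _ (lebesgue_measure [set` `[0%R, 1%R]])).
  by apply: le_measure => //; rewrite inE.
by rewrite lebesgue_measure_itv /= lte_fin ltr01 sube0.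
Qed.
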